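(* Let $H$ be a graph with an $\ell$-colouring $\phi_2$ such that every $\phi_2$-repetitive lazy walk in $H$ is boring. Then for every graph $G$, $\pi^*(G\boxtimes H)\le \ell\,\pi^*(G)$.
   Context: All graphs are finite and simple. A lazy walk in a graph $G$ is a sequence of vertices $v_1,\dots,v_m$ such that for each $i<m$, either $v_iv_{i+1}\in E(G)$ or $v_i=v_{i+1}$. For a colouring $\phi$ of $V(G)$, a lazy walk $v_1,\dots,v_{2t}$ is $\phi$-repetitive if $\phi(v_i)=\phi(v_{i+t})$ for each $i\in\{1,\dots,t\}$; it is boring if $v_i=v_{i+t}$ for every $i\in\{1,\dots,t\}$. A colouring $\phi$ is strongly nonrepetitive if for every $\phi$-repetitive lazy walk $v_1,\dots,v_{2t}$ there exists $i\in\{1,\dots,t\}$ with $v_i=v_{i+t}$. $\pi^*(G)$ denotes the minimum number of colours in a strongly nonrepetitive colouring of $G$. The strong product $A\boxtimes B$ has vertex set $V(A)\times V(B)$, with distinct $(v,x),(w,y)$ adjacent iff ($v=w$ and $xy\in E(B)$) or ($x=y$ and $vw\in E(A)$) or ($vw\in E(A)$ and $xy\in E(B)$). *)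

(* Defs.v *)
From HB Require Import structures.
From mathcomp Require Import all_boot.
From Stdlib Require Import ClassicalEpsilon.
Set Implicit Arguments. Unset Strict Implicit. Unset Printing Implicit Defensive.

Definition simple_graph (T : finType) (e : rel T) : Prop :=
  symmetric e /\ irreflexive e.

Definition lazy_walk (T : finType) (e : rel T) (w : nat -> T) (m : nat) : Prop :=
  forall i, i.+1 < m -> w i = w i.+1 \/ e (w i) (w i.+1).

Definition repetitive (T C : Type) (phi : T -> C) (w : nat -> T) (t : nat) : Prop :=
  forall i, i < t -> phi (w i) = phi (w (i + t)).

Definition boring (T : Type) (w : nat -> T) (t : nat) : Prop :=
  forall i, i < t -> w i = w (i + t).

(* Strongly nonrepetitive colouring (walks are nonempty, so t >= 1). *)
Definition strongly_nonrep (T : finType) (e : rel T) (C : Type) (phi : T -> C) : Prop :=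
  forall (t : nat) (w : nat -> T), 0 < t -> lazy_walk e w (2 * t) ->
    repetitive phi w t -> exists2 i, i < t & w i = w (i + t).

Definition snr_colourable (T : finType) (e : rel T) (k : nat) : Prop :=
  exists phi : T -> 'I_k, strongly_nonrep e phi.

Definition pbool (P : Prop) : bool :=
  if excluded_middle_informative P then true else false.

Lemma pboolP (P : Prop) : reflect P (pbool P).
Proof. rewrite /pbool; case: excluded_middle_informative => h; constructor => //. Qed.

Lemma snr_colourable_card (T : finType) (e : rel T) : snr_colourable e #|T|.
Proof.
exists (@enum_rank T) => t w t0 _ rep; exists 0 => //.
by apply: enum_rank_inj; apply: rep.
Qed.

Lemma ex_snr (T : finType) (e : rel T) : exists k, pbool (snr_colourable e k).
Proof. by exists #|T|; apply/pboolP; apply: snr_colourable_card. Qed.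

Definition pi_star (T : finType) (e : rel T) : nat := ex_minn (ex_snr e).

Definition strong_prod (A B : finType) (eA : rel A) (eB : rel B) : rel (A * B)%type :=
  fun p q =>
    (p != q) &&
    [|| (p.1 == q.1) && eB p.2 q.2,
        (p.2 == q.2) && eA p.1 q.1
      | eA p.1 q.1 && eB p.2 q.2].

(* Main.v *)
Require Import Defs.
From mathcomp Require Import all_boot.

Lemma card_pair k l : #|{: ('I_k * 'I_l)%type}| = l * k.
Proof. by rewrite card_prod !card_ord mulnC. Qed.

Theorem mainTheorem6 (TH : finType) (eH : rel TH) (l : nat) (phi2 : TH -> 'I_l)
  (hH : simple_graph eH)
  (hphi2 : forall (t : nat) (w : nat -> TH),
      lazy_walk eH w (2 * t) -> repetitive phi2 w t -> boring w t)
  (TG : finType) (eG : rel TG) (hG : simple_graph eG) :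
  pi_star (strong_prod eG eH) <= l * pi_star eG.
Proof.
rewrite /pi_star; case: ex_minnP => m _ Hmin.
case: ex_minnP => k /pboolP [phi1 Hphi1] _.
apply: Hmin; apply/pboolP.
exists (fun p => cast_ord (card_pair k l) (enum_rank (phi1 p.1, phi2 p.2))).
move=> t w t0 lw rep.
have rep' : forall i, i < t -> phi1 (w i).1 = phi1 (w (i + t)).1 /\
                               phi2 (w i).2 = phi2 (w (i + t)).2.
  move=> i it; have := rep i it => /cast_ord_inj /enum_rank_inj [-> ->]; by [].
have lw1 : lazy_walk eG (fun i => (w i).1) (2 * t).
  move=> i hi; case: (lw i hi) => [->|]; first by left.
  rewrite /strong_prod => /andP [_ /or3P [/andP [/eqP -> _]|/andP [_ ->]|/andP [-> _]]];
    by [left|right|right].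
have lw2 : lazy_walk eH (fun i => (w i).2) (2 * t).
  move=> i hi; case: (lw i hi) => [->|]; first by left.
  rewrite /strong_prod => /andP [_ /or3P [/andP [_ ->]|/andP [/eqP -> _]|/andP [_ ->]]];
    by [right|left|right].
have bor := hphi2 t _ lw2 (fun i hi => (rep' i hi).2).
have [i it Hi] := Hphi1 t _ t0 lw1 (fun i hi => (rep' i hi).1).
exists i => //.
by move: Hi (bor i it) => /=; case: (w i) => a b; case: (w (i + t)) => c d /= -> ->.
Qed.
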